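(* Let $J'=(z_w,z_w')$ be a nonempty open interval, let $r:J'\to\mathbb{R}$ be differentiable, non-increasing, with $|r(z)|<1$ on $J'$, and suppose $r$ has a unique zero $z_r\in J'$. Let $h:J'\to\mathbb{R}$ be differentiable with $\dot h(z)=1+h(z)^2-2r(z)h(z)$ on $J'$, having exactly one zero $z_*\in J'$. Let $G(z)=z-\dfrac{2h(z)}{2+h(z)^2-2r(z)h(z)}$. Then for every initial guess $z_0$ in the closed interval with endpoints $z_r$ and $z_*$ (in particular for $z_0=z_r$), the iteration $z_{n+1}=G(z_n)$ is well defined and $(z_n)$ converges monotonically to $z_*$.
   Context: $\dot{}$ denotes differentiation with respect to $z$. ''Converges monotonically'' means all iterates lie in $J'$, the sequence is monotone, and its limit is $z_*$. *)

(* Defs.v *)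
From Stdlib Require Export Reals.
Open Scope R_scope.

Definition Gden (r h : R -> R) (z : R) : R := 2 + (h z) ^ 2 - 2 * r z * h z.

Definition Gmap (r h : R -> R) (z : R) : R := z - 2 * h z / Gden r h z.

Fixpoint Giter (r h : R -> R) (z0 : R) (n : nat) : R :=
  match n with
  | O => z0
  | S m => Gmap r h (Giter r h z0 m)
  end.

(* Main.v *)
Require Import Defs.
From Stdlib Require Import Reals.
From Stdlib Require Import Lra Lia Psatz.
Open Scope R_scope.

Lemma psi_der (h : R -> R) r0 t d : derivable_pt_lim h t d ->
  2 + h t * h t - 2*r0*h t <> 0 ->
  derivable_pt_lim (fun s => s - 2*h s/(2 + h s*h s - 2*r0*h s)) t
   (1 - ((2*d)*(2 + h t*h t - 2*r0*h t) - (d*h t + h t*d - 2*r0*d)*(2*h t))/(2 + h t*h t - 2*r0*h t)²).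
Proof.
  intros Hd HE.
  assert (H1 := derivable_pt_lim_scal h 2 t d Hd).
  assert (H2 := derivable_pt_lim_mult h h t d d Hd Hd).
  assert (H3 := derivable_pt_lim_scal h (2*r0) t d Hd).
  assert (H4 := derivable_pt_lim_plus _ _ t 0 _ (derivable_pt_lim_const 2 t) H2).
  assert (H5 := derivable_pt_lim_minus _ _ t _ _ H4 H3).
  assert (H6 := derivable_pt_lim_div _ _ t _ _ H1 H5).
  assert (H6' : (fct_cte 2 + h * h - mult_real_fct (2 * r0) h)%F t <> 0).
  { unfold minus_fct, plus_fct, mult_fct, mult_real_fct, fct_cte. intro E; apply HE; rewrite <- E; ring. }
  specialize (H6 H6').
  assert (H7 := derivable_pt_lim_minus _ _ t _ _ (derivable_pt_lim_id t) H6).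
  unfold minus_fct, plus_fct, mult_fct, mult_real_fct, div_fct, fct_cte, id in *.
  replace (d * h t + h t * d - 2 * r0 * d) with (0 + (d * h t + h t * d) - 2 * r0 * d) by ring.
  exact H7.
Qed.
Lemma psi_sign x r0 d : -1 < r0 < 1 -> 0 < d -> d <= 1 + x*x - 2*r0*x ->
  0 <= 1 - ((2*d)*(2 + x*x - 2*r0*x) - (d*x + x*d - 2*r0*d)*(2*x))/(2 + x*x - 2*r0*x)².
Proof.
  intros Hr Hd Hle.
  set (E := 2 + x*x - 2*r0*x) in *.
  assert (HE : 0 < E). { unfold E. nra. }
  assert (Hk : E² - 2*d*(2 - x*x) >= 0).
  { destruct (Rle_dec (x*x) 2).
    - assert (E² - 2*(E-1)*(2-x*x) >= 0).
      { unfold E, Rsqr. assert (0 <= x*x*(3*x*x - 8*r0*x + 4*r0*r0 + 2)).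
        { apply Rmult_le_pos. nra. nra. }
        nra. }
      unfold E in *; nra.
    - unfold Rsqr. nra. }
  replace (1 - (2 * d * E - (d * x + x * d - 2 * r0 * d) * (2 * x)) / E²)
    with ((E² - 2*d*(2 - x*x))/E²).
  - apply Rmult_le_pos; [lra| apply Rlt_le, Rinv_0_lt_compat; unfold Rsqr; nra].
  - unfold E in *. field. unfold Rsqr in *. apply Rgt_not_eq; nra.
Qed.

Definition psi (h : R -> R) r0 := fun s => s - 2*h s/(2 + h s*h s - 2*r0*h s).

Lemma psi_mono (h r : R->R) zw zw' a b r0 : zw < a -> a < b -> b < zw' -> -1<r0<1 ->
 (forall z, zw<z<zw' -> derivable_pt_lim h z (1 + h z ^2 - 2*r z*h z)) ->
 (forall z, zw<z<zw' -> Rabs (r z) < 1) ->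
 (forall c, a <= c <= b -> r0 * h c <= r c * h c) ->
 psi h r0 a <= psi h r0 b.
Proof.
  intros Ha Hab Hb Hr0 Hd Hr Hc.
  destruct (MVT_cor2 (psi h r0)
    (fun c => let d := 1 + h c * h c - 2*r c*h c in
      1 - ((2*d)*(2 + h c*h c - 2*r0*h c) - (d*h c + h c*d - 2*r0*d)*(2*h c))/(2 + h c*h c - 2*r0*h c)²)
    a b Hab) as [c [Hc1 Hc2]].
  - intros c Hc'. unfold psi. apply psi_der.
    + replace (1 + h c * h c - 2 * r c * h c) with (1 + h c ^2 - 2*r c*h c) by ring.
      apply Hd; lra.
    + apply Rgt_not_eq; pose proof (Rle_0_sqr (h c - r0)); unfold Rsqr in *; nra.
  - assert (Hrc := Hr c ltac:(lra)). apply Rabs_def2 in Hrc.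
    assert (Hcc := Hc c ltac:(lra)).
    assert (0 <= 1 - ((2*(1 + h c * h c - 2*r c*h c))*(2 + h c*h c - 2*r0*h c) - ((1 + h c * h c - 2*r c*h c)*h c + h c*(1 + h c * h c - 2*r c*h c) - 2*r0*(1 + h c * h c - 2*r c*h c))*(2*h c))/(2 + h c*h c - 2*r0*h c)²).
    { apply psi_sign; [lra | pose proof (Rle_0_sqr (h c - r c)); unfold Rsqr in *; nra | nra]. }
    simpl in Hc1. nra.
Qed.

Lemma cv_shift (u : nat -> R) l : Un_cv u l -> Un_cv (fun n => u (S n)) l.
Proof.
  intros H eps He. destruct (H eps He) as [N HN]. exists N. intros n Hn. apply HN. lia.
Qed.

Theorem theorem3p5 (zw zw' : R) (r h : R -> R) (zr zs : R) :
  zw < zw' ->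
  (* r differentiable on J' = (zw, zw') *)
  (forall z, zw < z < zw' -> exists d, derivable_pt_lim r z d) ->
  (* r non-increasing on J' *)
  (forall x y, zw < x < zw' -> zw < y < zw' -> x <= y -> r y <= r x) ->
  (* |r| < 1 on J' *)
  (forall z, zw < z < zw' -> Rabs (r z) < 1) ->
  (* zr is the unique zero of r in J' *)
  zw < zr < zw' -> r zr = 0 ->
  (forall z, zw < z < zw' -> r z = 0 -> z = zr) ->
  (* h differentiable with h' = 1 + h^2 - 2 r h on J' *)
  (forall z, zw < z < zw' ->
     derivable_pt_lim h z (1 + (h z) ^ 2 - 2 * r z * h z)) ->
  (* zs is the unique zero of h in J' *)
  zw < zs < zw' -> h zs = 0 ->
  (forall z, zw < z < zw' -> h z = 0 -> z = zs) ->
  forall z0, Rmin zr zs <= z0 <= Rmax zr zs ->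
    (* well defined: iterates stay in J' and the denominator never vanishes *)
    (forall n, zw < Giter r h z0 n < zw' /\ Gden r h (Giter r h z0 n) <> 0) /\
    (* monotone *)
    (Un_growing (Giter r h z0) \/ Un_decreasing (Giter r h z0)) /\
    (* converges to zs *)
    Un_cv (Giter r h z0) zs.
Proof.
  intros Hw Hrd Hrm Hr1 Hzr Hrzr Hzru Hhd Hzs Hhzs Hzsu z0 Hz0.
  assert (Hrb : forall z, zw < z < zw' -> -1 < r z < 1).
  { intros z Hz. pose proof (Rabs_def2 _ _ (Hr1 z Hz)); lra. }
  assert (Hz0' : zw < z0 < zw').
  { unfold Rmin, Rmax in Hz0. destruct (Rle_dec zr zs); lra. }
  clear Hz0.
  assert (Hlt : forall a b, zw < a -> a < b -> b < zw' -> h a < h b).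
  { intros a b Ha Hab Hb.
    destruct (MVT_cor2 h (fun c => 1 + h c ^ 2 - 2 * r c * h c) a b Hab) as [c [E1 E2]].
    - intros c Hc; apply Hhd; lra.
    - assert (Hrc := Hrb c ltac:(lra)). simpl in E1.
      assert (0 < 1 + h c * (h c * 1) - 2 * r c * h c).
      { pose proof (Rle_0_sqr (h c - r c)); unfold Rsqr in *; nra. }
      assert (0 < (1 + h c * (h c * 1) - 2 * r c * h c) * (b - a)) by (apply Rmult_lt_0_compat; lra).
      lra. }
  assert (HD : forall z, zw < z < zw' -> 0 < Gden r h z).
  { intros z Hz. assert (Hrc := Hrb z Hz). unfold Gden. simpl.
    pose proof (Rle_0_sqr (h z - r z)); unfold Rsqr in *; nra. }
  assert (HG : forall z, Gmap r h z = psi h (r z) z).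
  { intros z. unfold Gmap, Gden, psi. simpl. now rewrite Rmult_1_r. }
  assert (Hpzs : forall r0, psi h r0 zs = zs).
  { intros r0. unfold psi. rewrite Hhzs. field. }
  assert (keyL : forall z, zw < z <= zs -> z <= Gmap r h z <= zs).
  { intros z Hz. destruct (Req_dec z zs) as [->|Hne].
    - rewrite HG, Hpzs. lra.
    - assert (Hhz : h z < 0) by (rewrite <- Hhzs; apply Hlt; lra).
      split.
      + unfold Gmap. assert (HDz := HD z ltac:(lra)).
        assert (0 <= - (2 * h z / Gden r h z)).
        { unfold Rdiv. assert (0 < / Gden r h z) by (apply Rinv_0_lt_compat; lra). nra. }
        lra.
      + rewrite HG. rewrite <- (Hpzs (r z)).
        apply (psi_mono h r zw zw'); [lra|lra|lra|apply Hrb; lra|exact Hhd|exact Hr1|].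
        intros c Hc.
        assert (h c <= 0).
        { destruct (Req_dec c zs) as [->|]. lra. rewrite <- Hhzs. apply Rlt_le, Hlt; lra. }
        assert (r c <= r z) by (apply Hrm; lra).
        nra. }
  assert (keyR : forall z, zs <= z < zw' -> zs <= Gmap r h z <= z).
  { intros z Hz. destruct (Req_dec z zs) as [->|Hne].
    - rewrite HG, Hpzs. lra.
    - assert (Hhz : 0 < h z) by (rewrite <- Hhzs; apply Hlt; lra).
      split.
      + rewrite HG. rewrite <- (Hpzs (r z)).
        apply (psi_mono h r zw zw'); [lra|lra|lra|apply Hrb; lra|exact Hhd|exact Hr1|].
        intros c Hc.
        assert (0 <= h c).
        { destruct (Req_dec c zs) as [->|]. lra. rewrite <- Hhzs. apply Rlt_le, Hlt; lra. }
        assert (r z <= r c) by (apply Hrm; lra).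
        nra.
      + unfold Gmap. assert (HDz := HD z ltac:(lra)).
        assert (0 <= (2 * h z / Gden r h z)).
        { unfold Rdiv. apply Rmult_le_pos.
          lra. apply Rlt_le, Rinv_0_lt_compat; lra. }
        lra. }
  assert (Hcont : forall l, zw < l < zw' -> continuity_pt (Gmap r h) l).
  { intros l Hl.
    assert (Hch : continuity_pt h l).
    { apply derivable_continuous_pt. exists (1 + h l ^ 2 - 2 * r l * h l). apply Hhd; auto. }
    assert (Hcr : continuity_pt r l).
    { destruct (Hrd l Hl) as [d Hd]. apply derivable_continuous_pt. exists d. exact Hd. }
    assert (HDc : continuity_pt (Gden r h) l).
    { unfold Gden.
      apply (continuity_pt_minus (fun z => 2 + h z ^ 2) (fun z => 2 * r z * h z)).
      - apply (continuity_pt_plus (fct_cte 2) (fun z => h z ^ 2)).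
        apply continuity_pt_const; intros x y; reflexivity.
        apply (continuity_pt_comp h (fun x => x ^ 2)); auto.
        apply derivable_continuous_pt, derivable_pt_pow.
      - apply (continuity_pt_mult (fun z => 2 * r z) h); auto.
        apply (continuity_pt_scal r 2); auto. }
    unfold Gmap.
    apply (continuity_pt_minus id (fun z => 2 * h z / Gden r h z)).
    apply derivable_continuous_pt, derivable_pt_id.
    apply (continuity_pt_div (fun z => 2 * h z) (Gden r h)); auto.
    apply (continuity_pt_scal h 2); auto.
    assert (HDl := HD l Hl). lra. }
  assert (Hfix : forall l, zw < l < zw' -> Un_cv (Giter r h z0) l -> l = zs).
  { intros l Hl Hcv.
    assert (H1 := continuity_seq _ _ _ (Hcont l Hl) Hcv).
    assert (H2 := cv_shift _ _ Hcv).
    assert (Heq : Gmap r h l = l).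
    { apply (UL_sequence (fun n => Giter r h z0 (S n))); auto. }
    apply Hzsu; auto.
    unfold Gmap in Heq. assert (HDl := HD l Hl).
    assert (2 * h l / Gden r h l = 0) by lra.
    unfold Rdiv in H. apply Rmult_integral in H. destruct H.
    lra. exfalso. apply Rinv_neq_0_compat in H; lra. }
  destruct (Rle_dec z0 zs) as [Hle|Hgt].
  - assert (Inv : forall n, z0 <= Giter r h z0 n <= zs).
    { induction n; simpl. lra. assert (H := keyL (Giter r h z0 n) ltac:(lra)). lra. }
    assert (Hg : Un_growing (Giter r h z0)).
    { intros n. simpl. assert (H := keyL (Giter r h z0 n) ltac:(specialize (Inv n); lra)). lra. }
    split; [|split].
    + intros n. specialize (Inv n). split. lra. apply Rgt_not_eq, HD. lra.
    + left; exact Hg.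
    + destruct (growing_cv _ Hg) as [l Hl].
      { exists zs. intros x [i ->]. apply Inv. }
      assert (l <= zs).
      { apply (Rle_cv_lim (Un := Giter r h z0) (Vn := fun _ => zs)); auto.
        apply Inv. intros eps He. exists 0%nat. intros. rewrite R_dist_eq. lra. }
      assert (z0 <= l) by (apply (Rle_trans _ _ _ (proj1 (Inv 0%nat))); apply growing_ineq; auto).
      rewrite <- (Hfix l); auto; lra.
  - assert (Inv : forall n, zs <= Giter r h z0 n <= z0).
    { induction n; simpl. lra. assert (H := keyR (Giter r h z0 n) ltac:(lra)). lra. }
    assert (Hg : Un_decreasing (Giter r h z0)).
    { intros n. simpl. assert (H := keyR (Giter r h z0 n) ltac:(specialize (Inv n); lra)). lra. }
    split; [|split].
    + intros n. specialize (Inv n). split. lra. apply Rgt_not_eq, HD. lra.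
    + right; exact Hg.
    + destruct (decreasing_cv _ Hg) as [l Hl].
      { exists (- zs). intros x [i ->]. unfold opp_seq. specialize (Inv i). lra. }
      assert (zs <= l).
      { apply (Rle_cv_lim (Un := fun _ => zs) (Vn := Giter r h z0)); auto.
        apply Inv. intros eps He. exists 0%nat. intros. rewrite R_dist_eq. lra. }
      assert (l <= z0) by (apply (Rle_trans _ _ _ (decreasing_ineq _ _ Hg Hl 0%nat)); apply Inv).
      rewrite <- (Hfix l); auto; lra.
Qed.
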